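(* For all messages $M,M'$ and input histories $s,s'$: (1) if $s\,R^c_M\,s'$ then $M\in\mathrm{cl}_{\mathsf{CM}}(s')$; (2) if $M\in\mathrm{cl}_{\mathsf{CM}}(s)$ then $s\,R^c_M\,s$; (3) there is an input history $s'$ with $s\,R^c_M\,s'$; (4) $R^c_M\subseteq R^c_{\mathsf{CM}}={\sqsubseteq}$; (5) if $s\,R^c_{\mathsf{CM}}\,t$ and $t\,R^c_M\,s'$ for some $t$, then $s\,R^c_M\,s'$; (6) if $M\preceq M'$ then $R^c_M\subseteq R^c_{M'}$.
   Context: Fix a finite set $\mathcal{A}$ of agent names containing a distinguished name $\mathsf{CM}$ (the communication medium). Messages are terms $M ::= a \mid B \mid (M,M)$ with $a\in\mathcal{A}$, $B$ optional application-specific data constants, $(M,M')$ pairs. Input histories are finite words of input events $\mathrm{in}_a(M)$ (''agent $a$ receives message $M$''), $a\in\mathcal{A}$, $M$ a message; $\mathtt{0}$ is the empty history, $\mathrm{in}_a(M)(s)$ extends $s$ by the event $\mathrm{in}_a(M)$, and $\star$ is word concatenation (with neutral element $\mathtt{0}$). The projection $\pi_a$ is defined by $\pi_a(\mathtt{0})=\mathtt{0}$ and $\pi_a(\mathrm{in}_b(M)(s))=\mathrm{in}_b(M)(\pi_a(s))$ if $a\in\{b,\mathsf{CM}\}$, and $=\pi_a(s)$ otherwise. $\mathrm{msgs}(s)$ is the set of messages occurring in events of $s$, and $\mathrm{cl}_a(s)$ is the smallest set of messages containing $a$ and $\mathrm{msgs}(\pi_a(s))$, closed under forming pairs of its elements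 and taking both components of pairs in it. $s\sqsubseteq_a s'$ iff there is $s''$ with $\pi_a(s)\star\pi_a(s'')=\pi_a(s')$; ${\sqsubseteq}:={\sqsubseteq_{\mathsf{CM}}}$; $s\equiv_a s'$ iff $s\sqsubseteq_a s'$ and $s'\sqsubseteq_a s$. The concrete accessibility: $s\,R^c_M\,s'$ iff there is an input history $\tilde s$ with $s\sqsubseteq_{\mathsf{CM}}\tilde s$, $M\in\mathrm{cl}_{\mathsf{CM}}(\tilde s)$ and $\tilde s\equiv_{\mathsf{CM}} s'$. For messages, $M\preceq M'$ iff for every input history $s$, $M\in\mathrm{cl}_{\mathsf{CM}}(s)$ implies $M'\in\mathrm{cl}_{\mathsf{CM}}(s)$. *)

(* Defs.v *)
From mathcomp Require Import all_boot.
Set Implicit Arguments. Unset Strict Implicit. Unset Printing Implicit Defensive.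

Section Model.
Variable Agent : finType.
Variable Data : Type.
Variable CM : Agent.        (* the communication medium *)

Inductive msg : Type :=
| MAgent of Agent
| MData of Data
| MPair of msg & msg.

Inductive event : Type := Ev of Agent & msg.

(* input histories: finite words of input events;
   [::] is 0, (Ev a M :: s) is in_a(M)(s), ++ is the concatenation star *)
Definition history := seq event.

Fixpoint proj (a : Agent) (s : history) : history :=
  match s with
  | [::] => [::]
  | Ev b M :: s' => if (a == b) || (a == CM) then Ev b M :: proj a s'
                    else proj a s'
  end.

Fixpoint msgs (s : history) (M : msg) : Prop :=
  match s with
  | [::] => False
  | Ev _ N :: s' => N = M \/ msgs s' M
  end.

Inductive cl (a : Agent) (s : history) : msg -> Prop :=
| cl_self : cl a s (MAgent a)
| cl_msgs M : msgs (proj a s) M -> cl a s M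
| cl_pair M1 M2 : cl a s M1 -> cl a s M2 -> cl a s (MPair M1 M2)
| cl_fst M1 M2 : cl a s (MPair M1 M2) -> cl a s M1
| cl_snd M1 M2 : cl a s (MPair M1 M2) -> cl a s M2.

Definition sqsub_a (a : Agent) (s s' : history) : Prop :=
  exists s'', proj a s ++ proj a s'' = proj a s'.

Definition sqsub (s s' : history) : Prop := sqsub_a CM s s'.

Definition equiv_a (a : Agent) (s s' : history) : Prop :=
  sqsub_a a s s' /\ sqsub_a a s' s.

Definition Rc (M : msg) (s s' : history) : Prop :=
  exists st, sqsub_a CM s st /\ cl CM st M /\ equiv_a CM st s'.

Definition msg_le (M M' : msg) : Prop :=
  forall s, cl CM s M -> cl CM s M'.

End Model.

(* Main.v *)
Require Import Defs.
From mathcomp Require Import all_boot zify.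

Lemma projCM (Agent : finType) (Data : Type) (CM : Agent) (s : history Agent Data) :
  proj CM CM s = s.
Proof.
elim: s => [|[b N] s IH] //=. by rewrite eqxx orbT IH.
Qed.

Lemma sqsubE (Agent : finType) (Data : Type) (CM : Agent) (s t : history Agent Data) :
  sqsub_a CM CM s t <-> exists x, s ++ x = t.
Proof.
rewrite /sqsub_a; split=> [[x]|[x <-]]; rewrite !projCM; first by exists x.
by exists x; rewrite projCM.
Qed.

Lemma equivE (Agent : finType) (Data : Type) (CM : Agent) (s t : history Agent Data) :
  equiv_a CM CM s t -> s = t.
Proof.
case=> H1 H2; move/sqsubE: H1 => [x Hx]; move/sqsubE: H2 => [y Hy].
have E1 := congr1 size Hx; have E2 := congr1 size Hy.
rewrite !size_cat in E1 E2.
have Ex : x = [::] by apply: size0nil; lia.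
by rewrite -Hx Ex cats0.
Qed.

Lemma eqvCM_refl (Agent : finType) (Data : Type) (CM : Agent) (s : history Agent Data) :
  equiv_a CM CM s s.
Proof. by split; apply/sqsubE; exists [::]; rewrite cats0. Qed.

Theorem proposition2 (Agent : finType) (Data : Type) (CM : Agent)
    (M M' : msg Agent Data) (s s' : history Agent Data) :
  (Rc CM M s s' -> cl CM CM s' M) /\
  (cl CM CM s M -> Rc CM M s s) /\
  (exists s'' : history Agent Data, Rc CM M s s'') /\
  ((forall u v, Rc CM M u v -> Rc CM (@MAgent Agent Data CM) u v) /\
   (forall u v, Rc CM (@MAgent Agent Data CM) u v <-> sqsub CM u v)) /\
  ((exists t, Rc CM (@MAgent Agent Data CM) s t /\ Rc CM M t s') -> Rc CM M s s') /\
  (msg_le CM M M' -> forall u v, Rc CM M u v -> Rc CM M' u v).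
Proof.
split; first by case=> st [_ [Hc /equivE <-]].
split.
  move=> Hc; exists s; split; [apply/sqsubE; exists [::]; rewrite cats0|split=>//].
  by []. exact: eqvCM_refl.
split.
  exists (s ++ [:: Ev CM M]), (s ++ [:: Ev CM M]); split; first by apply/sqsubE; exists [:: Ev CM M].
  split; last exact: eqvCM_refl.
  apply: cl_msgs; rewrite projCM; elim: s => [|[b N] s IH] /=; [by left|by right].
split.
  split.
    by move=> u v [st [H1 [_ H3]]]; exists st; split=>//; split=>//; apply: cl_self.
  move=> u v; split.
    by case=> st [H1 [_ /equivE <-]].
  move=> H; exists v; split=>//; split; [apply: cl_self| exact: eqvCM_refl].
split.
  case=> t [[st [H1 [_ /equivE E1]]] [st' [H2 [Hc H3]]]].
  subst st.
  exists st'; split=>//.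
  move/sqsubE: H1 => [x Hx]; move/sqsubE: H2 => [y Hy].
  by apply/sqsubE; exists (x ++ y); rewrite catA Hx.
by move=> Hle u v [st [H1 [H2 H3]]]; exists st; split=>//; split=>//; apply: Hle.
Qed.
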